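(* Let $k$ be a commutative ring, $B\to A$ a morphism of $k$-algebras, and let $t=\sum_is_i\otimes_Bt_i\in(A\otimes_BA)^B$ and $m,u\in A^B$ satisfy: (a) $\sum_is_it_i=1$ and $\sum_{i,j}s_i\otimes_Bt_is_j\otimes_Bt_j=\sum_is_i\otimes_B1\otimes_Bt_i$; (b) $tm=mt^2$; (c) $tu=u\otimes_B1$; (d) $m^2=\sum_ims_imt_i$; (e) $mu=\sum_ims_iut_i=1$. Let $(A\otimes_BA)_t$ denote the $A$-bimodule $A\otimes_BA$ equipped with $\Delta_t(a\otimes_Ba')=\sum_iams_i\otimes_Bt_i\otimes_Ba'$ (viewed in $(A\otimes_BA)\otimes_A(A\otimes_BA)\cong A\otimes_BA\otimes_BA$) and $e_t(a\otimes_Ba')=aua'$. Then the element $mt=\sum_ims_i\otimes_Bt_i$ is group-like in $(A\otimes_BA)_t$, i.e. $e_t(mt)=1$ and $\Delta_t(mt)=mt\otimes_Amt$.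
   Context: $A^B=\{a\in A\mid ba=ab\ \forall b\in B\}$ and $(A\otimes_BA)^B=\{x\in A\otimes_BA\mid bx=xb\ \forall b\in B\}$, using the natural $A$-bimodule structure of $A\otimes_BA$ (so e.g. $tm=\sum_is_i\otimes_Bt_im$ and $mt=\sum_ims_i\otimes_Bt_i$). The product on $(A\otimes_BA)^B$ is $(\sum_is_i\otimes_Bt_i)(\sum_js'_j\otimes_Bt'_j)=\sum_{i,j}s_is'_j\otimes_Bt'_jt_i$; in particular $t^2=\sum_{i,j}s_is_j\otimes_Bt_jt_i$. The isomorphism $(A\otimes_BA)\otimes_A(A\otimes_BA)\cong A\otimes_BA\otimes_BA$ is $a\otimes_Bb\otimes_Ac\otimes_Bd\mapsto a\otimes_Bbc\otimes_Bd$. *)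

(* Defs.v *)
(* Tensor products over B are not in the library; we define
   them honestly by their universal property (any model is canonically
   isomorphic to the usual construction). *)
From HB Require Import structures.
From mathcomp Require Import all_boot all_order all_algebra.
Set Implicit Arguments. Unset Strict Implicit. Unset Printing Implicit Defensive.
Import GRing.Theory.
Local Open Scope ring_scope.

Definition addmap (U V : zmodType) (h : U -> V) : Prop :=
  forall x y, h (x + y) = h x + h y.

Definition balanced2 (B A : nzRingType) (f : B -> A) (M : zmodType)
  (g : A -> A -> M) : Prop :=
  [/\ forall a, addmap (g a), forall a', addmap (fun a => g a a')
    & forall a b a', g (a * f b) a' = g a (f b * a')].

Definition is_tensor2 (B A : nzRingType) (f : B -> A) (T : zmodType)
  (tens : A -> A -> T) : Prop :=
  balanced2 f tens /\
  forall (M : zmodType) (g : A -> A -> M), balanced2 f g ->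
    exists h : T -> M, [/\ addmap h, forall a a', h (tens a a') = g a a'
      & forall h' : T -> M, addmap h' -> (forall a a', h' (tens a a') = g a a') ->
          forall x, h' x = h x].

Definition balanced3 (B A : nzRingType) (f : B -> A) (M : zmodType)
  (g : A -> A -> A -> M) : Prop :=
  [/\ forall a a', addmap (g a a'), forall a a'', addmap (fun a' => g a a' a''),
      forall a' a'', addmap (fun a => g a a' a''),
      forall a b a' a'', g (a * f b) a' a'' = g a (f b * a') a''
    & forall a a' b a'', g a (a' * f b) a'' = g a a' (f b * a'')].

Definition is_tensor3 (B A : nzRingType) (f : B -> A) (T : zmodType)
  (tens : A -> A -> A -> T) : Prop :=
  balanced3 f tens /\
  forall (M : zmodType) (g : A -> A -> A -> M), balanced3 f g ->
    exists h : T -> M, [/\ addmap h, forall a a' a'', h (tens a a' a'') = g a a' a''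
      & forall h' : T -> M, addmap h' ->
          (forall a a' a'', h' (tens a a' a'') = g a a' a'') ->
          forall x, h' x = h x].

(* Main.v *)
Require Import Defs.
From HB Require Import structures.
From mathcomp Require Import all_boot all_order all_algebra.
Import GRing.Theory.
Local Open Scope ring_scope.

Lemma addmap0 (U V : zmodType) (h : U -> V) : addmap h -> h 0 = 0.
Proof.
move=> H; have E := H 0 0; rewrite addr0 in E.
by apply: (@addrI _ (h 0)); rewrite addr0 -E.
Qed.

Lemma addmap_sum (U V : zmodType) (h : U -> V) n (F : 'I_n -> U) :
  addmap h -> h (\sum_(i < n) F i) = \sum_(i < n) h (F i).
Proof.
move=> H; elim: n F => [|n IH] F; first by rewrite !big_ord0 addmap0.
by rewrite !big_ord_recr /= H IH.
Qed.

Lemma addmap_sumf (U V : zmodType) n (G : 'I_n -> U -> V) :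
  (forall i, addmap (G i)) -> addmap (fun x => \sum_(i < n) G i x).
Proof. by move=> H x y; rewrite -big_split; apply: eq_bigr => i _; apply: H. Qed.

Lemma lift2 {B A : nzRingType} {f : B -> A} {T : zmodType} {tens : A -> A -> T}
  (HT : is_tensor2 f tens) {M : zmodType} {g : A -> A -> M} :
  balanced2 f g -> exists h : T -> M, addmap h /\ forall a a', h (tens a a') = g a a'.
Proof. by case: HT => _ U /U [h [? ? _]]; exists h. Qed.

Lemma lift3 {B A : nzRingType} {f : B -> A} {T : zmodType} {tens : A -> A -> A -> T}
  (HT : is_tensor3 f tens) {M : zmodType} {g : A -> A -> A -> M} :
  balanced3 f g -> exists h : T -> M, addmap h /\ forall a a' a'', h (tens a a' a'') = g a a' a''.
Proof. by case: HT => _ U /U [h [? ? _]]; exists h. Qed.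
Theorem lemma5p2 (k : comNzRingType) (B A : algType k)
  (f : {lrmorphism B -> A})
  (T2 : zmodType) (tens2 : A -> A -> T2) (T3 : zmodType) (tens3 : A -> A -> A -> T3)
  (HT2 : is_tensor2 f tens2) (HT3 : is_tensor3 f tens3)
  (n : nat) (s t : 'I_n -> A) (m u : A)
  (* t = \sum_i s_i (x) t_i lies in (A (x)_B A)^B *)
  (HtB : forall b : B, \sum_(i < n) tens2 (f b * s i) (t i)
                     = \sum_(i < n) tens2 (s i) (t i * f b))
  (* m, u lie in A^B *)
  (HmB : forall b : B, f b * m = m * f b)
  (HuB : forall b : B, f b * u = u * f b)
  (* (a) *)
  (Ha1 : \sum_(i < n) s i * t i = 1)
  (Ha2 : \sum_(i < n) \sum_(j < n) tens3 (s i) (t i * s j) (t j)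
         = \sum_(i < n) tens3 (s i) 1 (t i))
  (* (b) t m = m t^2 *)
  (Hb : \sum_(i < n) tens2 (s i) (t i * m)
        = \sum_(i < n) \sum_(j < n) tens2 (m * (s i * s j)) (t j * t i))
  (* (c) t u = u (x) 1 *)
  (Hc : \sum_(i < n) tens2 (s i) (t i * u) = tens2 u 1)
  (* (d) *)
  (Hd : m ^+ 2 = \sum_(i < n) m * s i * m * t i)
  (* (e) *)
  (He1 : m * u = 1)
  (He2 : \sum_(i < n) m * s i * u * t i = 1) :
  (* e_t(mt) = 1, for the counit e_t(a (x) a') = a u a' *)
  (forall e : T2 -> A, addmap e -> (forall a a', e (tens2 a a') = a * u * a') ->
     e (\sum_(i < n) tens2 (m * s i) (t i)) = 1)
  /\
  (* Delta_t(mt) = mt (x)_A mt, for Delta_t(a (x) a') = \sum_i a m s_i (x) t_i (x) a' *)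
  (forall D : T2 -> T3, addmap D ->
     (forall a a', D (tens2 a a') = \sum_(i < n) tens3 (a * m * s i) (t i) a') ->
     D (\sum_(i < n) tens2 (m * s i) (t i))
     = \sum_(i < n) \sum_(j < n) tens3 (m * s i) (t i * (m * s j)) (t j)).
Proof.
have HT2' := HT2; have HT3' := HT3.
case: HT2' => [[T2a T2b T2c] _]; case: HT3' => [[T3a T3b T3c T3d T3e] _].
have HtBg : forall (M : zmodType) (g : A -> A -> M), balanced2 f g -> forall b,
   \sum_(i < n) g (f b * s i) (t i) = \sum_(i < n) g (s i) (t i * f b).
  move=> M g Hg b; have [h [hA hE]] := lift2 HT2 Hg.
  have := congr1 h (HtB b); rewrite !addmap_sum //.
  by under eq_bigr do rewrite hE; under [RHS]eq_bigr do rewrite hE.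
split.
  move=> e He Hee; rewrite addmap_sum // -He2.
  by apply: eq_bigr => i _; apply: Hee.
move=> D HD HDe.
set tau := \sum_(i < n) s i * m * t i.
have I1 : \sum_(j < n) tens2 (tau * s j) (t j) = \sum_(j < n) tens2 (s j * m) (t j).
  have Hg : balanced3 f (fun a a' a'' => tens2 (a * m * a') a'').
    split.
    - by move=> a a'; apply: T2a.
    - by move=> a a'' x y; rewrite mulrDr T2b.
    - by move=> a' a'' x y; rewrite !mulrDl T2b.
    - by move=> a b a' a''; rewrite -!mulrA [f b * (m * _)]mulrA HmB -mulrA.
    - by move=> a a' b a''; rewrite mulrA T2c.
  have [h [hA hE]] := lift3 HT3 Hg.
  have := congr1 h Ha2; rewrite !addmap_sum //.
  under eq_bigr do rewrite addmap_sum //.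
  under eq_bigr do under eq_bigr do rewrite hE.
  under [RHS]eq_bigr do rewrite hE mulr1.
  move=> <-; rewrite exchange_big /=; apply: eq_bigr => j _.
  rewrite /tau mulr_suml.
  rewrite [LHS](@addmap_sum _ _ (fun a => tens2 a (t j))) //.
  by apply: eq_bigr => i _; rewrite !mulrA.
have Htau : m * tau = m ^+ 2.
  by rewrite Hd /tau mulr_sumr; apply: eq_bigr => i _; rewrite !mulrA.
have Hom : balanced2 f (fun x y => \sum_(k < n) tens3 (m * x * s k) (t k) y).
  split.
  - by move=> x a b; rewrite -big_split; apply: eq_bigr => l _; apply: T3a.
  - by move=> y a b; rewrite -big_split; apply: eq_bigr => l _; rewrite mulrDr mulrDl T3c.
  - move=> x b y.
    have Hch : balanced2 f (fun p q => tens3 (m * x * p) q y).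
      split.
      - by move=> p; apply: T3b.
      - by move=> q a c; rewrite mulrDr T3c.
      - by move=> p b' q; rewrite mulrA T3d.
    transitivity (\sum_(k < n) tens3 (m * x * (f b * s k)) (t k) y).
      by apply: eq_bigr => l _; rewrite !mulrA.
    rewrite (HtBg _ _ Hch b); apply: eq_bigr => l _; exact: T3e.
have LHSeq : D (\sum_(i < n) tens2 (m * s i) (t i))
   = \sum_(j < n) \sum_(k < n) tens3 (m ^+ 2 * s j * s k) (t k) (t j).
  rewrite addmap_sum //; under eq_bigr do rewrite HDe.
  have [h [hA hE]] := lift2 HT2 Hom.
  have := congr1 h I1; rewrite !addmap_sum //.
  move=> E; move: E.
  under [X in X = _ -> _]eq_bigr do rewrite hE.
  under [X in _ = X -> _]eq_bigr do rewrite hE.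
  move=> E.
  transitivity (\sum_(j < n) \sum_(k < n) tens3 (m * (s j * m) * s k) (t k) (t j)).
    by apply: eq_bigr => i _; apply: eq_bigr => l _; rewrite !mulrA.
  rewrite -E; apply: eq_bigr => j _; apply: eq_bigr => l _.
  by rewrite !mulrA -Htau.
have Hphi : balanced2 f (fun x y => \sum_(j < n) tens3 (m * x) (y * s j) (t j)).
  split.
  - by move=> x a b; rewrite -big_split; apply: eq_bigr => l _; rewrite mulrDl T3b.
  - by move=> y a b; rewrite -big_split; apply: eq_bigr => l _; rewrite mulrDr T3c.
  - move=> x b y; apply: eq_bigr => j _; by rewrite mulrA T3d mulrA.
rewrite LHSeq.
have [h2 [h2A h2E]] := lift2 HT2 Hphi.
have := congr1 h2 Hb; rewrite !addmap_sum //.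
under eq_bigr do rewrite h2E.
under [RHS]eq_bigr => i _ do rewrite addmap_sum //.
under [RHS]eq_bigr => i _ do under eq_bigr => j _ do rewrite h2E.
move=> Eb.
have Hpsi : balanced3 f (fun x y z => \sum_(k < n) tens3 (m * m * x * s k) (t k * y) z).
  split.
  - by move=> x y a b; rewrite -big_split; apply: eq_bigr => l _; apply: T3a.
  - by move=> x z a b; rewrite -big_split; apply: eq_bigr => l _; rewrite mulrDr T3b.
  - by move=> y z a b; rewrite -big_split; apply: eq_bigr => l _; rewrite mulrDr mulrDl T3c.
  - move=> a b a' a''.
    have Hch : balanced2 f (fun p q => tens3 (m * m * a * p) (q * a') a'').
      split.
      - by move=> p x y; rewrite mulrDl T3b.
      - by move=> q x y; rewrite mulrDr T3c.
      - by move=> p b' q; rewrite mulrA T3d mulrA.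
    transitivity (\sum_(k < n) tens3 (m * m * a * (f b * s k)) (t k * a') a'').
      by apply: eq_bigr => l _; rewrite !mulrA.
    rewrite (HtBg _ _ Hch b); apply: eq_bigr => l _; by rewrite !mulrA.
  - by move=> a a' b a''; apply: eq_bigr => l _; rewrite mulrA T3e.
have [h3 [h3A h3E]] := lift3 HT3 Hpsi.
have := congr1 h3 Ha2; rewrite !addmap_sum //.
under eq_bigr => i _ do rewrite addmap_sum //.
under eq_bigr => i _ do under eq_bigr => j _ do rewrite h3E.
under [RHS]eq_bigr do rewrite h3E.
move=> E2.
transitivity (\sum_(i < n) \sum_(k < n) tens3 (m * m * s i * s k) (t k * 1) (t i)).
  by apply: eq_bigr => i _; apply: eq_bigr => l _; rewrite expr2 mulr1.
rewrite -E2.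
transitivity (\sum_(i < n) \sum_(j < n) tens3 (m * s i) (t i * m * s j) (t j)); last first.
  by apply: eq_bigr => i _; apply: eq_bigr => l _; rewrite !mulrA.
rewrite Eb; apply: eq_bigr => i _; rewrite exchange_big /=.
by apply: eq_bigr => j _; apply: eq_bigr => l _; rewrite !mulrA.
Qed.
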